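(* For all $m\geq 1$ and $n\in\mathbb N$, \[ s_{n,m}(122,132)=\frac{1}{mn+1}\binom{(m+1)n}{n}. \]
   Context: $[n]_m=\{1^m,\ldots,n^m\}$; a permutation of $[n]_m$ is a sequence of length $nm$ in which each element of $[n]$ appears exactly $m$ times. A sequence avoids a pattern $\pi$ if it has no subsequence order-isomorphic to $\pi$ (same relative order and same equalities among entries). $s_{n,m}(\Pi)$ is the number of permutations of $[n]_m$ avoiding all patterns in $\Pi$. *)

(* Defs.v *)
From mathcomp Require Import all_boot all_order all_algebra.
Set Implicit Arguments. Unset Strict Implicit. Unset Printing Implicit Defensive.

(* s and p are order-isomorphic: same length, and for all positions i, j,
   s_i < s_j iff p_i < p_j (on a total order this also fixes equalities). *)
Definition order_iso (s p : seq nat) : bool :=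
  (size s == size p) &&
  [forall i : 'I_(size p), forall j : 'I_(size p),
     (nth 0 s i < nth 0 s j) == (nth 0 p i < nth 0 p j)].

Definition contains (s p : seq nat) : bool :=
  [exists b : (size s).-tuple bool, order_iso (mask b s) p].

Definition avoids (s p : seq nat) : bool := ~~ contains s p.

Definition multiset_nm (n m : nat) : seq nat :=
  flatten [seq nseq m i | i <- iota 1 n].

Definition is_perm_nm (n m : nat) (s : seq nat) : bool :=
  perm_eq s (multiset_nm n m).

Definition snm (n m : nat) (Pi : seq (seq nat)) : nat :=
  #|[set t : (n * m).-tuple 'I_n |
      let s := [seq (val i).+1 | i <- t] in
      is_perm_nm n m s && all (avoids s) Pi]|.

(* Main.v *)
Require Import Defs.
From mathcomp Require Import all_boot all_order all_algebra zify ring.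
Set Implicit Arguments. Unset Strict Implicit. Unset Printing Implicit Defensive.


Lemma containsP (s p : seq nat) :
  reflect (exists2 u, subseq u s & order_iso u p) (contains s p).
Proof.
apply: (iffP existsP) => [[b Hb]|[u /subseqP[b Hs ->] Hu]].
  by exists (mask b s) => //; apply: mask_subseq.
have Hb : size b == size s by apply/eqP.
by exists (Tuple Hb).
Qed.

Definition bad3 (s : seq nat) :=
  exists x y z, subseq [:: x; y; z] s /\ x < z <= y.

Lemma oi3 (x y z a b c : nat) :
  order_iso [:: x; y; z] [:: a; b; c] =
  [&& (x < y) == (a < b), (x < z) == (a < c), (y < z) == (b < c),
      (y < x) == (b < a), (z < x) == (c < a) & (z < y) == (c < b)].
Proof.
rewrite /order_iso /=.
apply/idP/idP.
  move=> /forallP H.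
  have E i j (Hi : i < 3) (Hj : j < 3) :=
    eqP (forallP (H (Ordinal Hi)) (Ordinal Hj)).
  by rewrite (E 0 1) // (E 0 2) // (E 1 2) // (E 1 0) // (E 2 0) // (E 2 1) //
    !eqxx.
move=> /and5P[/eqP h1 /eqP h2 /eqP h3 /eqP h4 /andP[/eqP h5 /eqP h6]].
apply/forallP => -[[|[|[|i]]] Hi] //; apply/forallP => -[[|[|[|j]]] Hj] //=;
  by rewrite ?ltnn ?h1 ?h2 ?h3 ?h4 ?h5 ?h6.
Qed.

Lemma bad3P (s : seq nat) :
  (contains s [:: 1; 2; 2] || contains s [:: 1; 3; 2]) <-> bad3 s.
Proof.
split.
  have K u p : order_iso u p -> size p = 3 -> exists x y z, u = [:: x; y; z].
    move=> /andP[/eqP Hs _] Hp; rewrite Hp in Hs.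
    case: u Hs => [|x [|y [|z [|]]]] // _; by exists x, y, z.
  case/orP => /containsP[u Hsub Hu];
  have [x [y [z Eu]]] := K _ _ Hu erefl; subst u; move: Hu; rewrite oi3 /=;
  move=> /and5P[/eqP h1 /eqP h2 /eqP h3 /eqP h4 /andP[/eqP h5 /eqP h6]];
  exists x, y, z; split=> //; rewrite h2 /=; by rewrite leqNgt h3.
move=> [x [y [z [Hs /andP[Hxz Hzy]]]]].
have Hxy : x < y by apply: leq_trans Hzy.
apply/orP; case: (ltngtP z y) Hzy => // [Hzy' _|Ezy _].
  right; apply/containsP; exists [:: x; y; z] => //.
  rewrite oi3 /= Hxy Hxz Hzy' (ltnNge y z) (ltnW Hzy') (ltnNge y x) (ltnW Hxy).
  by rewrite (ltnNge z x) (ltnW Hxz).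
left; apply/containsP; exists [:: x; y; z] => //.
subst z; rewrite oi3 /= Hxy ltnn (ltnNge y x) (ltnW Hxy).
by [].
Qed.


Fixpoint valid (s : seq nat) : bool :=
  if s is a :: s' then pairwise ltn [seq x <- s' | a < x] && valid s' else true.

Lemma filt_bad a s : ~~ pairwise ltn [seq x <- s | a < x] <->
  exists y z, subseq [:: y; z] s /\ a < z <= y.
Proof.
elim: s => [|b s IH] /=.
  by split=> // -[y [z []]].
have sub2 y z : subseq [:: y; z] s -> subseq [:: y; z] (b :: s).
  by move=> H; apply: subseq_trans H (subseq_cons s b).
case: ifP => Hab.
  rewrite pairwise_cons negb_and; split.
    case/orP.
      case/allPn => z; rewrite mem_filter => /andP[Haz Hz] Hbz.
      exists b, z; split; first by rewrite /= eqxx sub1seq.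
      by rewrite Haz leqNgt.
    by move/IH => [y [z [H1 H2]]]; exists y, z; split=> //; apply: sub2.
  move=> [y [z [/= H1 H2]]]; move: H1; case: eqP => [Eyb|Hyb] H1.
    subst y; apply/orP; left; apply/allPn; exists z.
      by rewrite mem_filter -sub1seq H1; case/andP: H2 => ->.
    by rewrite -leqNgt; case/andP: H2.
  by apply/orP; right; apply/IH; exists y, z.
split.
  by move/IH => [y [z [H1 H2]]]; exists y, z; split=> //; apply: sub2.
move=> [y [z [/= H1 H2]]]; move: H1; case: eqP => [Eyb|Hyb] H1.
  by subst y; case/andP: H2 => H2 H3; rewrite (leq_trans H2 H3) in Hab.
by apply/IH; exists y, z.
Qed.

Lemma validN s : ~~ valid s <-> bad3 s.
Proof.
elim: s => [|a s IH] /=.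
  by split=> // -[x [y [z []]]].
rewrite negb_and; split.
  case/orP.
    move/filt_bad => [y [z [H1 H2]]]; exists a, y, z; split=> //.
    by rewrite /= eqxx.
  move/IH => [x [y [z [H1 H2]]]]; exists x, y, z; split=> //.
  by apply: subseq_trans H1 (subseq_cons s a).
move=> [x [y [z [/= H1 H2]]]]; move: H1; case: eqP => [Exa|Hxa] H1.
  by subst x; apply/orP; left; apply/filt_bad; exists y, z.
by apply/orP; right; apply/IH; exists x, y, z.
Qed.

Lemma valid_subseq s1 s2 : subseq s1 s2 -> valid s2 -> valid s1.
Proof.
move=> Hs H2; apply/negP => /negP /validN [x [y [z [H1 H3]]]].
have : ~~ valid s2 by apply/validN; exists x, y, z; split=> //;
  apply: subseq_trans H1 Hs.
by rewrite H2.
Qed.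

Lemma avoids_valid s :
  all (avoids s) [:: [:: 1; 2; 2]; [:: 1; 3; 2]] = valid s.
Proof.
rewrite /= /avoids andbT -negb_or.
apply/idP/idP.
  move=> H; apply/negPn/negP => /validN /bad3P; by rewrite (negbTE H).
move=> H; apply/negP => /bad3P /validN; by rewrite H.
Qed.


Definition okcut (w : seq nat) (c : nat) : bool :=
  allrel (fun y x => y <= x) (drop c w) (take c w).

Definition ins (m v : nat) (w : seq nat) (c : nat) : seq nat :=
  nseq m.-1 v ++ take c w ++ v :: drop c w.

Lemma filter_le0 v r : all (fun x => x <= v) r -> [seq x <- r | v < x] = [::].
Proof. by elim: r => //= a r IH /andP[H1 H2]; rewrite ltnNge H1 /= IH. Qed.

Lemma valid_vprefix k v t :
  all (fun x => x <= v) t -> valid t -> valid (nseq k v ++ t).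
Proof.
move=> Ht Hv; elim: k => //= k IH; rewrite IH andbT filter_le0 //.
by rewrite all_cat Ht andbT; apply/allP => x /nseqP[->].
Qed.

Lemma valid_mid v x y : valid (x ++ y) -> all (fun a => a < v) (x ++ y) ->
  allrel (fun b a => b <= a) y x -> valid (x ++ v :: y).
Proof.
elim: x => [|a x IH] /=.
  move=> Hy Hlt _; rewrite Hy andbT filter_le0 //.
  by apply/allP => z /(allP Hlt) /ltnW.
move=> /andP[Hp Hv] /andP[Hav Hlt].
rewrite allrel_consr => /andP[Hya Hyx].
rewrite IH // andbT filter_cat /= Hav.
have -> : [seq z <- y | a < z] = [::].
  by apply: filter_le0.
move: Hp; rewrite filter_cat (filter_le0 Hya) cats0 => Hp.
rewrite pairwise_cat Hp /= andbT allrel1r.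
apply/allP => z; rewrite mem_filter => /andP[_ Hz].
by apply: (allP Hlt); rewrite mem_cat Hz.
Qed.

Lemma ins_valid m v w c : valid w -> all (fun a => a < v) w -> okcut w c ->
  valid (ins m v w c).
Proof.
move=> Hv Hlt Hc; rewrite /ins; apply: valid_vprefix.
  rewrite all_cat /= leqnn /=; apply/andP; split; apply/allP => z Hz;
  apply: ltnW; apply: (allP Hlt).
    by rewrite -(cat_take_drop c w) mem_cat Hz.
  by rewrite -(cat_take_drop c w) mem_cat Hz orbT.
apply: valid_mid => //; by rewrite cat_take_drop.
Qed.

Lemma cnseq (v k : nat) : count_mem v (nseq k v) = k.
Proof. by elim: k => //= k ->; rewrite eqxx. Qed.

Lemma ins_filter m v w c : all (fun a => a < v) w ->
  [seq x <- ins m v w c | x < v] = w.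
Proof.
move=> Hlt; rewrite /ins !filter_cat /= ltnn.
have -> : [seq x <- nseq m.-1 v | x < v] = [::].
  by elim: m.-1 => //= k ->; rewrite ltnn.
by rewrite -filter_cat cat_take_drop; apply/all_filterP.
Qed.

Lemma ins_count m v w c : 0 < m -> all (fun a => a < v) w ->
  count_mem v (ins m v w c) = m.
Proof.
move=> Hm Hlt; rewrite /ins !count_cat /= cnseq.
have H0 u : {subset u <= w} -> count_mem v u = 0.
  move=> Hs; apply/eqP; rewrite -leqn0 leqNgt -has_count; apply/hasPn => z /Hs.
  by move/(allP Hlt); rewrite ltn_neqAle => /andP[].
rewrite (H0 (take c w)) ?(H0 (drop c w)) ?eqxx ?add0n ?addn0 ?addn1 ?prednK //
  => z Hz.
  by rewrite -(cat_take_drop c w) mem_cat Hz orbT.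
by rewrite -(cat_take_drop c w) mem_cat Hz.
Qed.

Lemma valid_suffix p q : valid (p ++ q) -> valid q.
Proof. by apply: valid_subseq; apply: suffix_subseq. Qed.

Lemma valid_mid_inv v x y : valid (x ++ v :: y) ->
  all (fun a => a <= v) (x ++ y) -> v \notin x ->
  allrel (fun b a => b <= a) y x.
Proof.
elim: x => [|a x IH] /=; first by rewrite allrel0r.
move=> /andP[Hp Hv] /andP[Hav Hle]; rewrite inE negb_or => /andP[Hva Hvx].
rewrite allrel_consr IH // andbT.
have Hav' : a < v by rewrite ltn_neqAle eq_sym Hva.
move: Hp; rewrite filter_cat /= Hav' pairwise_cat /= => /and3P[_ _ /andP[Hall _]].
apply/allP => b Hb; rewrite leqNgt; apply/negP => Hab.
have := allP Hall b; rewrite mem_filter Hab Hb => /(_ erefl).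
have : b <= v by apply: (allP Hle); rewrite mem_cat Hb orbT.
by move=> H1 H2; move: H2 => /=; rewrite ltnNge H1.
Qed.

Lemma split_v v s : exists j r, s = nseq j v ++ r /\ (forall (a : nat) (r' : seq nat), r = a :: r' -> a != v).
Proof.
elim: s => [|a s [j [r [-> Hr]]]]; first by exists 0, [::].
case: (eqVneq a v) => [->|Hav].
  by exists j.+1, r.
by exists 0, (a :: nseq j v ++ r); split=> // b r' [<- _].
Qed.

Lemma decomp m v s : 0 < m -> valid s -> all (fun x => x <= v) s ->
  count_mem v s = m ->
  exists c, [/\ okcut [seq x <- s | x < v] c, c <= size [seq x <- s | x < v]
            & s = ins m v [seq x <- s | x < v] c].
Proof.
move=> Hm Hv Hle Hcnt.
have [j [r [Es Hr]]] := split_v v s.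
have Hlt : forall x, x \in s -> x != v -> x < v.
  by move=> x /(allP Hle) H1 H2; rewrite ltn_neqAle H1 H2.
have Hfilt : forall t, {subset t <= s} -> v \notin t ->
    [seq x <- t | x < v] = t.
  move=> t Hts Hvt; apply/all_filterP/allP => x Hx; apply: Hlt; first exact: Hts.
  by apply: contraNneq Hvt => <-.
case: r Es Hr => [|a r'] Es Hr.
  rewrite cats0 in Es; have Ej : j = m by rewrite -Hcnt Es cnseq.
  subst j.
  have -> : [seq x <- s | x < v] = [::] by rewrite Es; elim: (m) => //= k ->; rewrite ltnn.
  exists 0; split=> //; rewrite /ins /= Es -{1}(prednK Hm) -[m.-1.+1]addn1 nseqD.
  by [].
have Hav : a != v by apply: (Hr a r').
have Hsub : {subset a :: r' <= s} by move=> z Hz; rewrite Es mem_cat Hz orbT.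
have Ha : a < v by apply: Hlt; [apply: Hsub; rewrite inE eqxx | ].
have Hvr : valid (a :: r') by apply: (@valid_suffix (nseq j v)); rewrite -Es.
have Hcr : count_mem v r' <= 1.
  move: Hvr => /= /andP[Hp _].
  have Hu := pairwise_uniq ltnn Hp.
  have E : count_mem v [seq x <- r' | a < x] = count_mem v r'.
    elim: (r') => //= b t IH; case: ifP => Hab /=; rewrite IH //.
    by case: eqP => // Ebv; subst b; rewrite Ha in Hab.
  by rewrite -E (count_uniq_mem v Hu); case: (_ \in _).
have Ecnt : j + count_mem v r' = m.
  by rewrite -Hcnt Es count_cat cnseq /= (negbTE Hav).
case: (posnP (count_mem v r')) => Hc0.
  have Ej : j = m by rewrite -Ecnt Hc0 addn0.
  subst j.
  have Hvr' : v \notin a :: r'.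
    by rewrite inE negb_or eq_sym Hav /= -has_pred1 has_count Hc0.
  have Ef : [seq x <- s | x < v] = a :: r'.
    rewrite Es filter_cat.
    have -> : [seq x <- nseq m v | x < v] = [::] by elim: (m) => //= k ->; rewrite ltnn.
    by rewrite Hfilt.
  exists 0; rewrite Ef; split; rewrite ?/okcut ?take0 ?allrel0r //; rewrite /ins /= Es.
  by rewrite -{1}(prednK Hm) -[m.-1.+1]addn1 nseqD -catA.
have Hc1 : count_mem v r' = 1 by apply/eqP; rewrite eqn_leq Hcr Hc0.
have Ej : j = m.-1 by rewrite -Ecnt Hc1 addn1.
subst j.
have Hvin : v \in r' by rewrite -has_pred1 has_count Hc1.
case/splitPr: Hvin Es Hc1 Hsub Hvr => x' y Es Hc1 Hsub Hvr.
rewrite count_cat /= eqxx /= in Hc1.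
have [Ex Ey] : count_mem v x' = 0 /\ count_mem v y = 0.
  move: Hc1; rewrite addnCA add1n => -[] /eqP; rewrite addn_eq0.
  by move=> /andP[/eqP -> /eqP ->].
have Hvx : v \notin x' by rewrite -has_pred1 has_count Ex.
have Hvy : v \notin y by rewrite -has_pred1 has_count Ey.
set x := a :: x'.
have Hvx2 : v \notin x by rewrite inE negb_or eq_sym Hav.
have Ef : [seq x <- s | x < v] = x ++ y.
  rewrite Es filter_cat.
  have -> : [seq x <- nseq m.-1 v | x < v] = [::] by elim: (m.-1) => //= k ->; rewrite ltnn.
  rewrite /= Ha filter_cat /= ltnn (Hfilt x') ?(Hfilt y) // => z Hz; apply: Hsub;
  by rewrite inE mem_cat inE Hz !orbT.
exists (size x); rewrite Ef; split.
- rewrite /okcut take_size_cat // drop_size_cat //.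
  apply: (@valid_mid_inv v) => //.
  apply/allP => z Hz; apply: (allP Hle); rewrite Es mem_cat; apply/orP; right.
  by move: Hz; rewrite /x /= !inE !mem_cat inE => /orP[->|/orP[->|->]]; rewrite ?orbT.
- by rewrite size_cat leq_addr.
- by rewrite /ins take_size_cat // drop_size_cat // Es.
Qed.


Definition cuts (w : seq nat) : seq nat :=
  [seq c <- iota 0 (size w).+1 | okcut w c].

Lemma tk1 (p q : seq nat) k : take (size p + k) (p ++ q) = p ++ take k q.
Proof. by rewrite takeD take_size_cat // drop_size_cat. Qed.

Lemma dr1 (p q : seq nat) k : drop (size p + k) (p ++ q) = drop k q.
Proof. by rewrite addnC -drop_drop drop_size_cat. Qed.

Lemma count_iota_shift (P : pred nat) a n :
  count P (iota a n) = count (fun t => P (a + t)) (iota 0 n).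
Proof. by rewrite -{1}(addn0 a) iotaDl count_map. Qed.

Lemma ncuts_ins m v w c : 0 < m -> all (fun a => a < v) w -> okcut w c ->
  c <= size w ->
  size (cuts (ins m v w c)) = m + count (fun i => c <= i) (cuts w).
Proof.
move=> Hm Hlt Hc Hcw.
set x := take c w; set y := drop c w.
have Hx : size x = c by rewrite size_take_min; apply/minn_idPl.
have Hw : w = x ++ y by rewrite cat_take_drop.
have Hsw : size w = c + size y by rewrite Hw size_cat Hx.
set s := ins m v w c.
have Es : s = nseq m.-1 v ++ x ++ v :: y by [].
have Hsz : (size s).+1 = m + (c + (size y).+1).
  by rewrite Es !size_cat size_nseq /= Hx; lia.
have Hle : all (fun a => a <= v) s.
  rewrite Es all_cat all_cat /= leqnn /=; apply/and3P; split.
  - by apply/allP => z /nseqP[->].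
  - apply/allP => z Hz; apply: ltnW; apply: (allP Hlt); by rewrite Hw mem_cat Hz.
  - apply/allP => z Hz; apply: ltnW; apply: (allP Hlt); by rewrite Hw mem_cat Hz orbT.
rewrite /cuts size_filter Hsz iotaD iotaD !count_cat add0n.
have HA : count (okcut s) (iota 0 m) = m.
  rewrite -[RHS](size_iota 0 m) -count_predT; apply: eq_in_count => i.
  rewrite mem_iota add0n /= => Hi; apply/allrelP => a b Ha Hb.
  have Hi' : i <= size (nseq m.-1 v) by rewrite size_nseq; lia.
  move: Hb; rewrite Es takel_cat // => /mem_take /nseqP[-> _].
  by apply: (allP Hle); apply: mem_drop Ha.
have HB : count (okcut s) (iota m c) = 0.
  rewrite count_iota_shift; apply/eqP; rewrite -leqn0 leqNgt -has_count.
  apply/hasPn => t; rewrite mem_iota add0n => Ht /=.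
  case: x Hx Hw Es Ht => [|x0 x'] Hx Hw Es Ht.
    by rewrite -Hx in Ht.
  have Hx0 : x0 < v by apply: (allP Hlt); rewrite Hw inE eqxx.
  apply/negP => /allrelP H.
  have Ei : m + t = size (nseq m.-1 v) + t.+1 by rewrite size_nseq; lia.
  suff [H1 H2] : v \in drop (m + t) s /\ x0 \in take (m + t) s.
    by move: (H v x0 H1 H2); rewrite leqNgt Hx0.
  split.
    rewrite Ei Es dr1 drop_cat; case: ifP => _.
      by rewrite mem_cat inE eqxx orbT.
    have -> : t.+1 - size (x0 :: x') = 0 by rewrite /= -Hx in Ht; lia.
    by rewrite drop0 inE eqxx.
  by rewrite Ei Es tk1 mem_cat /= inE eqxx orbT.
rewrite HA HB add0n; congr (_ + _).
rewrite count_filter Hsw -addnS iotaD count_cat add0n.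
have -> : count (predI (fun i => c <= i) (okcut w)) (iota 0 c) = 0.
  apply/eqP; rewrite -leqn0 leqNgt -has_count; apply/hasPn => i.
  by rewrite mem_iota add0n /= => Hi; rewrite leqNgt Hi.
rewrite add0n count_iota_shift [RHS]count_iota_shift; apply: eq_count => t /=.
rewrite leq_addr /=.
have Ei : m + c + t = size (nseq m.-1 v) + (size x + (1 + t)).
  by rewrite size_nseq Hx; lia.
rewrite /okcut Ei Es tk1 tk1 dr1 dr1 /= !add0n -Hx.
have -> : drop (size x + t) w = drop t y by rewrite {1}Hw dr1.
have -> : take (size x + t) w = x ++ take t y by rewrite {1}Hw tk1.
rewrite !allrel_catr allrel_consr.

have -> : allrel (fun y x => y <= x) (drop t y) (nseq m.-1 v).
  apply/allrelP => a b Ha /nseqP[-> _]; apply: (allP Hle).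
  by rewrite Es !mem_cat inE (mem_drop Ha) !orbT.
have -> : all (fun y => y <= v) (drop t y).
  apply/allP => a Ha; apply: (allP Hle).
  by rewrite Es !mem_cat inE (mem_drop Ha) !orbT.
by [].
Qed.


Fixpoint desc (m t v : nat) (w : seq nat) : seq (seq nat) :=
  if t is t'.+1 then flatten [seq desc m t' v.+1 (ins m v w c) | c <- cuts w]
  else [:: w].

Fixpoint g (m t k : nat) : nat :=
  if t is t'.+1 then sumn [seq g m t' (m + i) | i <- iota 1 k] else 1.

Lemma sum_cnt (f : nat -> nat) (l : seq nat) : sorted ltn l ->
  sumn [seq f (count (fun i => c <= i) l) | c <- l] =
  sumn [seq f i | i <- iota 1 (size l)].
Proof.
elim: l => //= c0 l IH Hs.
have Hall : all (ltn c0) l by move: Hs; rewrite (path_sortedE ltn_trans); case/andP.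
have Hsl : sorted ltn l by move: Hs; rewrite (path_sortedE ltn_trans); case/andP.
rewrite leqnn add1n.
have -> : count (fun i => c0 <= i) l = size l.
  apply/eqP; rewrite -all_count; apply/allP => z /(allP Hall) /ltnW //.
have -> : [seq f ((c <= c0) + count (fun i => c <= i) l) | c <- l] =
          [seq f (count (fun i => c <= i) l) | c <- l].
  apply/eq_in_map => c /(allP Hall) Hc /=; have -> : (c <= c0) = false by apply/negbTE; rewrite -ltnNge.
  by [].
rewrite IH //.
transitivity (sumn [seq f i | i <- iota 1 (size l).+1]); last by [].
have -> : iota 1 (size l).+1 = iota 1 (size l) ++ [:: (size l).+1].
  by rewrite -(addn1 (size l)) iotaD /= addnC.
by rewrite map_cat sumn_cat /= addn0 addnC.
Qed.

Lemma ins_lt m v w c : all (fun a => a < v) w -> all (fun a => a < v.+1) (ins m v w c).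
Proof.
move=> H; rewrite /ins all_cat all_cat /= ltnSn /=; apply/and3P; split.
- by apply/allP => z /nseqP[->].
- apply/allP => z Hz; rewrite ltnS ltnW //; apply: (allP H).
  by rewrite -(cat_take_drop c w) mem_cat Hz.
- apply/allP => z Hz; rewrite ltnS ltnW //; apply: (allP H).
  by rewrite -(cat_take_drop c w) mem_cat Hz orbT.
Qed.

Lemma mem_cuts w c : (c \in cuts w) = okcut w c && (c <= size w).
Proof. by rewrite mem_filter mem_iota add0n ltnS. Qed.

Lemma cuts_sorted w : sorted ltn (cuts w).
Proof. by apply: sorted_filter => //; [apply: ltn_trans | apply: iota_ltn_sorted]. Qed.

Lemma size_desc m t v w : 0 < m -> all (fun a => a < v) w ->
  size (desc m t v w) = g m t (size (cuts w)).
Proof.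
move=> Hm; elim: t v w => [//|t IH] v w Hw /=.
rewrite size_flatten /shape -map_comp.
rewrite (_ : map _ _ = [seq g m t (m + count (fun i => c <= i) (cuts w)) | c <- cuts w]).
  by rewrite (sum_cnt (fun i => g m t (m + i))) // cuts_sorted.
apply/eq_in_map => c; rewrite mem_cuts => /andP[Hc Hcw] /=.
by rewrite IH ?ins_lt // ncuts_ins.
Qed.

Definition Good (m t v : nat) (w s : seq nat) : bool :=
  [&& valid s, [seq x <- s | x < v] == w, all (fun x => x < v + t) s &
      all (fun u => count_mem u s == m) (iota v t)].

Lemma count_filt_lt u v s : u < v -> count_mem u [seq x <- s | x < v] = count_mem u s.
Proof.
move=> H; rewrite count_filter; apply: eq_count => x /=.
by case: eqP => // ->; rewrite H.
Qed.

Lemma filt_filt v s : [seq x <- [seq x <- s | x < v.+1] | x < v] = [seq x <- s | x < v].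
Proof.
rewrite -filter_predI; apply: eq_filter => x /=.
by rewrite andb_idr // => H; rewrite ltnS ltnW.
Qed.

Lemma mem_desc m t v w s : 0 < m -> valid w -> all (fun a => a < v) w ->
  (s \in desc m t v w) = Good m t v w s.
Proof.
move=> Hm; elim: t v w s => [|t IH] v w s Hvw Hw.
  rewrite /Good /= inE addn0 andbT.
  apply/eqP/idP => [->|/and3P[H1 /eqP H2 H3]].
    by rewrite Hvw Hw /=; apply/andP; split=> //; apply/eqP/all_filterP.
  by rewrite -H2; apply/esym/all_filterP.
apply/flattenP/idP => [[ds /mapP[c Hc ->] Hs]|].
  move: Hc; rewrite mem_cuts => /andP[Hc Hcw].
  move: Hs; rewrite IH ?ins_lt ?ins_valid // /Good.
  move=> /and4P[H1 /eqP H2 H3 H4]; rewrite H1 /=.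
  rewrite -filt_filt H2 ins_filter // eqxx /= -addSnnS H3 /=.
  rewrite H4 andbT -(count_filt_lt _ (ltnSn v)) H2 ins_count //.
move=> /and4P[H1 /eqP H2 H3 /= /andP[/eqP H4 H5]].
set u := [seq x <- s | x < v.+1].
have Hvu : valid u by apply: valid_subseq H1; apply: filter_subseq.
have Hlu : all (fun x => x <= v) u by apply/allP => z; rewrite mem_filter => /andP[].
have Hcu : count_mem v u = m by rewrite count_filt_lt.
have [c [Hc Hcw Eu]] := decomp Hm Hvu Hlu Hcu.
have Hfu : [seq x <- u | x < v] = w by rewrite filt_filt.
rewrite Hfu in Hc Hcw Eu.
exists (desc m t v.+1 (ins m v w c)).
  by apply/mapP; exists c => //; rewrite mem_cuts Hc Hcw.
rewrite IH ?ins_lt ?ins_valid // /Good H1 -Eu eqxx addSnnS H3 /=.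
by [].
Qed.


Lemma uniq_flatten_map (T : eqType) (F : nat -> seq T) (l : seq nat) :
  uniq l -> (forall c, c \in l -> uniq (F c)) ->
  (forall c c' s, c \in l -> c' \in l -> s \in F c -> s \in F c' -> c = c') ->
  uniq (flatten (map F l)).
Proof.
elim: l => //= c l IH /andP[Hcl Hu] HF Hd.
rewrite cat_uniq HF ?inE ?eqxx //= IH ?andbT //; first last.
- by move=> a b s Ha Hb; apply: Hd; rewrite inE ?Ha ?Hb orbT.
- by move=> a Ha; apply: HF; rewrite inE Ha orbT.
apply/hasPn => s /flattenP[ds /mapP[c' Hc' ->] Hs]; apply/negP => Hs'.
have E : c = c' by apply: (Hd c c' s); rewrite ?inE ?eqxx ?Hc' ?orbT.
by subst c'; rewrite Hc' in Hcl.
Qed.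

Lemma ins_inj m v w c c' : all (fun a => a < v) w -> c <= size w -> c' <= size w ->
  ins m v w c = ins m v w c' -> c = c'.
Proof.
move=> Hlt Hc Hc' E.
have E2 : take c w ++ v :: drop c w = take c' w ++ v :: drop c' w.
  by move: (congr1 (drop (size (nseq m.-1 v))) E); rewrite /ins !drop_size_cat.
have Hn d : v \notin take d w.
  apply/negP => /mem_take /(allP Hlt); by rewrite ltnn.
move: (congr1 (index v) E2); rewrite !index_pivot ?Hn // !size_take_min.
by move/minn_idPl: Hc => ->; move/minn_idPl: Hc' => ->.
Qed.

Lemma uniq_desc m t v w : 0 < m -> valid w -> all (fun a => a < v) w ->
  uniq (desc m t v w).
Proof.
move=> Hm; elim: t v w => [//|t IH] v w Hvw Hw /=.
apply: uniq_flatten_map.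
- by apply: filter_uniq; apply: iota_uniq.
- move=> c; rewrite mem_cuts => /andP[Hc _].
  by apply: IH; [apply: ins_valid | apply: ins_lt].
move=> c c' s; rewrite !mem_cuts => /andP[Hc Hcw] /andP[Hc' Hcw'].
rewrite !mem_desc ?ins_lt ?ins_valid // /Good.
move=> /and4P[_ /eqP E1 _ _] /and4P[_ /eqP E2 _ _].
by apply: (ins_inj (m:=m) Hw) => //; rewrite -E1 -E2.
Qed.


Lemma g_rec m t k : g m t.+1 k.+1 = g m t.+1 k + g m t (m + k.+1).
Proof.
transitivity (sumn [seq g m t (m + i) | i <- iota 1 k.+1]); first by [].
have -> : iota 1 k.+1 = iota 1 k ++ [:: k.+1].
  by rewrite -(addn1 k) iotaD /= addnC.
by rewrite map_cat sumn_cat /= addn0.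
Qed.

Lemma g1 m k : g m 1 k = k.
Proof. by elim: k => // k IH; rewrite g_rec IH addn1. Qed.

Lemma g_closed m t k :
  g m t.+1 k + m.+1 * 'C(m * t.+1 + t + k, t) = 'C((m * t.+1 + t + k).+1, t.+1).
Proof.
elim: t k => [|t IH] k.
  by rewrite g1 !bin0 bin1 muln1; lia.
elim: k => [|k IHk].
  have E : g m t.+2 0 = 0 by [].
  rewrite E add0n addn0.
  have H := mul_bin_diag (m * t.+2 + t.+1).+1 t.+1.
  have -> : (m * t.+2 + t.+1).+1 = t.+2 * m.+1 by lia.
  apply/eqP; rewrite -(eqn_pmul2l (ltn0Sn t.+1)) mulnA; apply/eqP.
  move: H => /=; rewrite (_ : (m * t.+2 + t.+1).+1 = t.+2 * m.+1); last by lia.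
  by move=> <-.
rewrite g_rec.
have := IH (m + k.+1).
have -> : m * t.+1 + t + (m + k.+1) = m * t.+2 + t.+1 + k by lia.
have -> : m * t.+2 + t.+1 + k.+1 = (m * t.+2 + t.+1 + k).+1 by lia.
move: IHk; set P := m * t.+2 + t.+1 + k => IHk.
rewrite (binS P.+1 t.+1) (binS P t).
set g2 := g m t.+2 k; set g1' := g m t.+1 _.
move: IHk; rewrite (binS P t.+1).
nia.
Qed.


Lemma count_nseq_sum m x (l : seq nat) :
  sumn [seq count_mem x (nseq m i) | i <- l] = m * count_mem x l.
Proof.
elim: l => [|i l IH] /=; first by rewrite muln0.
by rewrite IH count_nseq mulnDr /= mulnC.
Qed.

Lemma count_multiset n m x :
  count_mem x (multiset_nm n m) = m * (x \in iota 1 n).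
Proof.
by rewrite /multiset_nm count_flatten -map_comp count_nseq_sum
  (count_uniq_mem _ (iota_uniq 1 n)).
Qed.

Lemma size_multiset n m : size (multiset_nm n m) = n * m.
Proof.
rewrite /multiset_nm size_flatten /shape -map_comp.
have -> : forall l : seq nat, sumn [seq (size \o nseq m) i | i <- l] = size l * m.
  by elim=> //= i l ->; rewrite size_nseq mulSn.
by rewrite size_iota.
Qed.

Lemma perm_char n m s : 0 < m ->
  perm_eq s (multiset_nm n m) =
  [&& [seq x <- s | x < 1] == [::], all (fun x => x < 1 + n) s &
      all (fun u => count_mem u s == m) (iota 1 n)].
Proof.
move=> Hm; apply/idP/idP.
  move/permP => H.
  have C x : count_mem x s = m * (x \in iota 1 n) by rewrite (H (pred1 x)) count_multiset.
  have Hin x : x \in s -> x \in iota 1 n.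
    move=> Hx; apply/negPn/negP => Hn.
    have : 0 < count_mem x s by rewrite -has_count has_pred1.
    by rewrite C (negbTE Hn) muln0.
  apply/and3P; split.
  - rewrite -[_ == _]negbK -has_filter; apply/hasPn => x /Hin.
    by rewrite mem_iota => /andP[H1 _]; rewrite -leqNgt.
  - by apply/allP => x /Hin; rewrite mem_iota => /andP[].
  - by apply/allP => u Hu; rewrite C Hu muln1.
move=> /and3P[H1 H2 H3].
rewrite /perm_eq; apply/allP => x _ /=; apply/eqP; rewrite count_multiset.
case: (boolP (x \in iota 1 n)) => Hx.
  by rewrite muln1; apply/eqP; apply: (allP H3).
rewrite muln0; apply/count_memPn; apply/negP => Hxs.
move: Hx; rewrite mem_iota (allP H2 x Hxs) andbT -leqNgt.
have : x \notin [seq x <- s | x < 1] by rewrite (eqP H1).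
by rewrite mem_filter Hxs andbT; case: x {Hxs}.
Qed.

Import GRing.Theory Num.Theory.

Lemma val_pmap_insub n (s : seq nat) : all (fun y => y < n) s ->
  map val (pmap (insub : nat -> option 'I_n) s) = s.
Proof.
elim: s => //= y s IH /andP[Hy Hs].
case: insubP => [u _ Eu|]; last by rewrite Hy.
by rewrite /= -Eu IH.
Qed.

Lemma card_snm n m : 0 < m ->
  snm n m [:: [:: 1; 2; 2]; [:: 1; 3; 2]] = size (desc m n 1 [::]).
Proof.
move=> Hm; rewrite /snm cardE.
set A := [set t : (n * m).-tuple 'I_n | _].
set f := fun t : (n * m).-tuple 'I_n => [seq (val i).+1 | i <- t].
have Hinj : injective f.
  move=> t1 t2 /(inj_map (fun a b (H : (val a).+1 = (val b).+1) => val_inj (succn_inj H))).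
  by move/val_inj.
rewrite -(size_map f); apply: perm_size; apply: uniq_perm.
- by rewrite map_inj_uniq // enum_uniq.
- by apply: uniq_desc.
move=> s; rewrite mem_desc // /Good.
apply/mapP/idP => [[t Ht ->]|].
  move: Ht; rewrite mem_enum inE avoids_valid /is_perm_nm perm_char //.
  by move=> /andP[/and3P[-> -> ->] ->].
move=> /and4P[Hv H1 H2 H3].
have Hperm : perm_eq s (multiset_nm n m) by rewrite perm_char // H1 H2 H3.
have Hpos : all (fun x => 0 < x) s.
  apply/allP => x Hx; rewrite lt0n; apply/negP => /eqP Ex; subst x.
  have : 0 \in [seq x <- s | x < 1] by rewrite mem_filter Hx.
  by rewrite (eqP H1).
set u := pmap (insub : nat -> option 'I_n) (map predn s).
have Hu : map val u = map predn s.
  apply: val_pmap_insub; apply/allP => y /mapP[x Hx ->].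
  have := allP H2 x Hx; have := allP Hpos x Hx; case: x {Hx} => //= x _.
have Hsz : size u == n * m.
  by rewrite -(size_map val) Hu size_map (perm_size Hperm) size_multiset.
exists (Tuple Hsz).
  rewrite mem_enum inE avoids_valid /is_perm_nm.
  have -> : [seq (val i).+1 | i <- Tuple Hsz] = s.
    rewrite /= (map_comp succn val) Hu -map_comp; apply: map_id_in => x Hx /=.
    by rewrite prednK //; apply: (allP Hpos).
  by rewrite Hv Hperm.
rewrite /f /= (map_comp succn val) Hu -map_comp; apply/esym/map_id_in => x Hx /=.
by rewrite prednK //; apply: (allP Hpos).
Qed.

Theorem mainTheorem8 (m n : nat) (hm : (1 <= m)%N) :
  ((snm n m [:: [:: 1; 2; 2]; [:: 1; 3; 2]])%:R : rat)
  = (('C((m + 1) * n, n))%:R / (m * n + 1)%:R)%R.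
Proof.
rewrite card_snm // size_desc // (_ : size (cuts [::]) = 1) //.
case: n => [|t]; first by rewrite bin0 muln0 /= divr1.
have E1 := g_closed m t 1.
set N := m * t.+1 + t + 1 in E1.
have EN : (m + 1) * t.+1 = N by rewrite /N; lia.
rewrite EN.
rewrite binS in E1.
set G := g m t.+1 1 in E1 *.
set A := 'C(N, t.+1) in E1 *; set B := 'C(N, t) in E1.
have E1' : G + m * B = A by move: E1; rewrite mulSn; lia.
have E2 := mul_bin_left N t.
have EN2 : N - t = m * t.+1 + 1 by rewrite /N; lia.
rewrite EN2 -/A -/B in E2.
have R1 : (G%:R : rat) = (A%:R - m%:R * B%:R)%R.
  by rewrite -E1' natrD natrM addrK.
have Hne : ((m * t.+1 + 1)%:R : rat) != 0%R by rewrite pnatr_eq0 addn1.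
have R2 : (B%:R : rat) = (t.+1%:R * A%:R / (m * t.+1 + 1)%:R)%R.
  by rewrite -natrM E2 natrM mulrAC divff // mul1r.
rewrite R1 R2; move: Hne; rewrite !natrD !natrM => Hne.
field.
by rewrite (addrC 1%R) natr1 -natrM natr1 pnatr_eq0.
Qed.
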